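(* Let $\mathcal C$ and $\mathcal D$ be categories and $F\colon\mathcal C\to\mathcal D$ a functor. (1) If $\mathcal C$ has AP and $F$ is essentially wide and absorbing, then $\mathcal D$ has AP. (2) If $\mathcal C$ has CAP and $F$ is cofinal and absorbing, then $\mathcal D$ has CAP. (3) If $\mathcal C$ has WAP and $F$ is cofinal and weakly absorbing, then $\mathcal D$ has WAP. In particular, if $F$ is wide and star-surjective, then each of AP, CAP and WAP for $\mathcal C$ implies the same property for $\mathcal D$.
   Context: In a category, an object $A$ is an amalgamation base if for all morphisms $\alpha_1\colon A\to B$, $\alpha_2\colon A\to C$ there are an object $D$ and morphisms $\beta_1\colon B\to D$, $\beta_2\colon C\to D$ with $\beta_1\alpha_1=\beta_2\alpha_2$. AP: every object is an amalgamation base. CAP: every object $A_0$ has a morphism into an amalgamation base. WAP: every object $A_0$ has a morphism $i\colon A_0\to A$ that is amalgamable, i.e. for all $\alpha_1\colon A\to B$, $\alpha_2\colon A\to C$ there are $\beta_1\colon B\to D$, $\beta_2\colon C\to D$ with $\beta_1\alpha_1 i=\beta_2\alpha_2 i$. A functor $F\colon\mathcal C\to\mathcal D$ is: wide if every $\mathcal D$-object equals $F(X')$ for some $\mathcal C$-object $X'$; essentially wide if every $\mathcal D$-object is isomorphic to some $F(X')$; cofinal if for every $\mathcal D$-object $X$ there are a $\mathcal C$-object $X'$ and a $\mathcal D$-morphism $X\to F(X')$; star-surjective if for every $\mathcal C$-object $X'$ and $\mathcal D$-morphism $f\colon F(X')\to Y$ there is a $\mathcal C$-morphism $f'\colon X'\to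 Y'$ with $F(f')=f$; absorbing if for every $\mathcal C$-object $X'$ and $\mathcal D$-morphism $f\colon F(X')\to Y$ there are a $\mathcal C$-morphism $f'\colon X'\to Y'$ and a $\mathcal D$-morphism $g\colon Y\to F(Y')$ with $F(f')=g\circ f$; weakly absorbing if for every $\mathcal C$-object $X'$ there is a $\mathcal D$-morphism $e\colon F(X')\to X$ such that for every $\mathcal D$-morphism $f\colon X\to Y$ there are a $\mathcal C$-morphism $f'\colon X'\to Y'$ and a $\mathcal D$-morphism $g\colon Y\to F(Y')$ with $F(f')=g\circ f\circ e$. *)

(* Defs.v *)
Record Category := {
  Ob : Type;
  Hom : Ob -> Ob -> Type;
  idm : forall a : Ob, Hom a a;
  comp : forall a b c : Ob, Hom b c -> Hom a b -> Hom a c;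
  comp_id_l : forall a b (f : Hom a b), comp a b b (idm b) f = f;
  comp_id_r : forall a b (f : Hom a b), comp a a b f (idm a) = f;
  comp_assoc : forall a b c d (f : Hom a b) (g : Hom b c) (h : Hom c d),
      comp a c d h (comp a b c g f) = comp a b d (comp b c d h g) f
}.

Arguments Hom {C} : rename.
Arguments idm {C} : rename.
Arguments comp {C} {a b c} : rename.

Notation "g ∘ f" := (comp g f) (at level 40, left associativity).

Record Functor (C D : Category) := {
  fobj : Ob C -> Ob D;
  fmap : forall a b : Ob C, Hom a b -> Hom (fobj a) (fobj b);
  fmap_id : forall a, fmap a a (idm a) = idm (fobj a);
  fmap_comp : forall a b c (f : Hom a b) (g : Hom b c),
      fmap a c (g ∘ f) = fmap b c g ∘ fmap a b f
}.

Arguments fobj {C D} F : rename.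
Arguments fmap {C D} F {a b} : rename.

Section Props.
Variable C : Category.

Definition amalgamation_base (A : Ob C) : Prop :=
  forall (B Cc : Ob C) (a1 : Hom A B) (a2 : Hom A Cc),
    exists (D : Ob C) (b1 : Hom B D) (b2 : Hom Cc D), b1 ∘ a1 = b2 ∘ a2.

Definition AP : Prop := forall A : Ob C, amalgamation_base A.

Definition CAP : Prop :=
  forall A0 : Ob C, exists (A : Ob C) (_ : Hom A0 A), amalgamation_base A.

Definition amalgamable {A0 A : Ob C} (i : Hom A0 A) : Prop :=
  forall (B Cc : Ob C) (a1 : Hom A B) (a2 : Hom A Cc),
    exists (D : Ob C) (b1 : Hom B D) (b2 : Hom Cc D),
      b1 ∘ a1 ∘ i = b2 ∘ a2 ∘ i.

Definition WAP : Prop :=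
  forall A0 : Ob C, exists (A : Ob C) (i : Hom A0 A), amalgamable i.

Definition is_iso {a b : Ob C} (f : Hom a b) : Prop :=
  exists g : Hom b a, g ∘ f = idm a /\ f ∘ g = idm b.

Definition isomorphic (a b : Ob C) : Prop :=
  exists f : Hom a b, is_iso f.
End Props.

Arguments amalgamable {C A0 A} i.
Arguments is_iso {C a b} f.

Section FunctorProps.
Variables C D : Category.
Variable F : Functor C D.

Definition wide : Prop := forall X : Ob D, exists X' : Ob C, fobj F X' = X.

Definition essentially_wide : Prop :=
  forall X : Ob D, exists X' : Ob C, isomorphic D X (fobj F X').

Definition cofinal : Prop :=
  forall X : Ob D, exists (X' : Ob C) (_ : Hom X (fobj F X')), True.

(* F(f') = f, where the codomain F(Y') of F(f') is identified with Y via p *)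
Definition star_surjective : Prop :=
  forall (X' : Ob C) (Y : Ob D) (f : Hom (fobj F X') Y),
    exists (Y' : Ob C) (f' : Hom X' Y') (p : fobj F Y' = Y),
      eq_rect (fobj F Y') (fun Z => Hom (fobj F X') Z) (fmap F f') Y p = f.

Definition absorbing : Prop :=
  forall (X' : Ob C) (Y : Ob D) (f : Hom (fobj F X') Y),
    exists (Y' : Ob C) (f' : Hom X' Y') (g : Hom Y (fobj F Y')),
      fmap F f' = g ∘ f.

Definition weakly_absorbing : Prop :=
  forall X' : Ob C, exists (X : Ob D) (e : Hom (fobj F X') X),
    forall (Y : Ob D) (f : Hom X Y),
      exists (Y' : Ob C) (f' : Hom X' Y') (g : Hom Y (fobj F Y')),
        fmap F f' = g ∘ f ∘ e.
End FunctorProps.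

Arguments wide {C D} F.
Arguments essentially_wide {C D} F.
Arguments cofinal {C D} F.
Arguments star_surjective {C D} F.
Arguments absorbing {C D} F.
Arguments weakly_absorbing {C D} F.

(* Main.v *)
Require Import Defs.

Ltac rassoc := repeat rewrite <- comp_assoc.

Lemma wide_ess (C D : Category) (F : Functor C D) : wide F -> essentially_wide F.
Proof.
  intros W X. destruct (W X) as [X' p]. subst X. exists X', (idm _), (idm _).
  split; apply comp_id_l.
Qed.

Lemma wide_cof (C D : Category) (F : Functor C D) : wide F -> cofinal F.
Proof.
  intros W X. destruct (W X) as [X' p]. subst X. exists X', (idm _). exact I.
Qed.

Lemma ss_abs (C D : Category) (F : Functor C D) : star_surjective F -> absorbing F.
Proof.
  intros S X' Y f. destruct (S X' Y f) as [Y' [f' [p H]]]. subst Y. simpl in H.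
  exists Y', f', (idm _). rewrite comp_id_l. exact H.
Qed.

Lemma abs_wabs (C D : Category) (F : Functor C D) : absorbing F -> weakly_absorbing F.
Proof.
  intros Ab X'. exists (fobj F X'), (idm _). intros Y f.
  destruct (Ab X' Y f) as [Y' [f' [g H]]]. exists Y', f', g.
  rewrite comp_id_r. exact H.
Qed.

Lemma part1 (C D : Category) (F : Functor C D) :
  AP C -> essentially_wide F -> absorbing F -> AP D.
Proof.
  intros Ap E Ab A B Cc a1 a2.
  destruct (E A) as [X' [h [k [Hkh Hhk]]]].
  destruct (Ab X' B (a1 ∘ k)) as [Y1 [f1 [g1 H1]]].
  destruct (Ab X' Cc (a2 ∘ k)) as [Y2 [f2 [g2 H2]]].
  destruct (Ap X' Y1 Y2 f1 f2) as [D' [b1 [b2 Hb]]].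
  exists (fobj F D'), (fmap F b1 ∘ g1), (fmap F b2 ∘ g2).
  assert (E0 : fmap F b1 ∘ g1 ∘ (a1 ∘ k) = fmap F b2 ∘ g2 ∘ (a2 ∘ k)).
  { rewrite <- !comp_assoc, <- H1, <- H2, <- !fmap_comp, Hb. reflexivity. }
  assert (E' := f_equal (fun z => z ∘ h) E0). simpl in E'. repeat rewrite <- comp_assoc in E'.
  rewrite Hkh, !comp_id_r in E'. rassoc. exact E'.
Qed.

Lemma part2 (C D : Category) (F : Functor C D) :
  CAP C -> cofinal F -> absorbing F -> CAP D.
Proof.
  intros Cp Cf Ab A0.
  destruct (Cf A0) as [X' [u _]].
  destruct (Cp X') as [A [i HA]].
  exists (fobj F A), (fmap F i ∘ u).
  intros B Cc a1 a2.
  destruct (Ab A B a1) as [Y1 [f1 [g1 H1]]].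
  destruct (Ab A Cc a2) as [Y2 [f2 [g2 H2]]].
  destruct (HA Y1 Y2 f1 f2) as [D' [b1 [b2 Hb]]].
  exists (fobj F D'), (fmap F b1 ∘ g1), (fmap F b2 ∘ g2).
  rewrite <- !comp_assoc, <- H1, <- H2, <- !fmap_comp, Hb. reflexivity.
Qed.

Lemma part3 (C D : Category) (F : Functor C D) :
  WAP C -> cofinal F -> weakly_absorbing F -> WAP D.
Proof.
  intros Wp Cf Wa A0.
  destruct (Cf A0) as [X' [u _]].
  destruct (Wp X') as [A [i HA]].
  destruct (Wa A) as [X [e He]].
  exists X, (e ∘ fmap F i ∘ u).
  intros B Cc a1 a2.
  destruct (He B a1) as [Y1 [f1 [g1 H1]]].
  destruct (He Cc a2) as [Y2 [f2 [g2 H2]]].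
  destruct (HA Y1 Y2 f1 f2) as [D' [b1 [b2 Hb]]].
  exists (fobj F D'), (fmap F b1 ∘ g1), (fmap F b2 ∘ g2).
  assert (E : fmap F b1 ∘ fmap F f1 ∘ fmap F i = fmap F b2 ∘ fmap F f2 ∘ fmap F i).
  { rewrite <- !fmap_comp. rewrite Hb. reflexivity. }
  rewrite H1, H2 in E.
  assert (E' := f_equal (fun z => z ∘ u) E). simpl in E'. repeat rewrite <- comp_assoc in E'. rassoc. exact E'.
Qed.

Theorem proposition3p7 (C D : Category) (F : Functor C D) :
  (AP C -> essentially_wide F -> absorbing F -> AP D) /\
  (CAP C -> cofinal F -> absorbing F -> CAP D) /\
  (WAP C -> cofinal F -> weakly_absorbing F -> WAP D) /\
  (wide F -> star_surjective F ->
     (AP C -> AP D) /\ (CAP C -> CAP D) /\ (WAP C -> WAP D)).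
Proof.
  split; [apply part1|]. split; [apply part2|]. split; [apply part3|].
  intros W S. split; [|split].
  - intro H. apply (part1 C D F H (wide_ess C D F W) (ss_abs C D F S)).
  - intro H. apply (part2 C D F H (wide_cof C D F W) (ss_abs C D F S)).
  - intro H. apply (part3 C D F H (wide_cof C D F W) (abs_wabs C D F (ss_abs C D F S))).
Qed.
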